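(* Let $R$ be a ring, $*\in\{l,\emptyset\}$, $S\in\mathbb{L}_*(R,\mathfrak{a})$, $\overline{R}=R/\mathfrak{a}$ and $\overline{S}=(S+\mathfrak{a})/\mathfrak{a}$. The functor $S^{-1}:R\text{-mod}\to S^{-1}R\text{-mod}$, $M\mapsto S^{-1}M$, is exact if and only if for all left $R$-modules $M_1\subseteq M_2$ the $\overline{R}$-module $(M_1\cap\mathfrak{a}M_2)/\mathfrak{a}M_1$ is $\overline{S}$-torsion.
   Context: Rings are associative with $1$. Multiplicative set: $SS\subseteq S$, $1\in S$, $0\notin S$. $R\langle S^{-1}\rangle=R\langle X_S\rangle/I_S$ ($R\langle X_S\rangle$ freely generated by $R$ and noncommuting $x_s$, $s\in S$; $I_S$ generated by $sx_s-1,x_ss-1$); $\mathrm{ass}_R(S)=\ker(R\to R\langle S^{-1}\rangle)$. $S$ is left localizable if $R\langle S^{-1}\rangle\ne0$ and every element has the form $(x_s+I_S)(r+I_S)$; localizable if moreover every element also has the form $(r+I_S)(x_s+I_S)$. $\mathbb{L}_l(R,\mathfrak{a})$ (resp. $\mathbb{L}_\emptyset(R,\mathfrak{a})$) is the set of left localizable (resp. localizable) sets $S$ with $\mathrm{ass}_R(S)=\mathfrak{a}$. $S^{-1}R:=R\langle S^{-1}\rangle$; for a left $R$-module $M$, $S^{-1}M:=S^{-1}R\otimes_RM$. Here $\overline{S}$ is a left denominator set of $\overline{R}$ consisting of regular elements and $S^{-1}R\simeq\overline{S}^{-1}\overline{R}$; an $\overline{R}$-module $N$ is $\overline{S}$-torsion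 if $\overline{S}^{-1}\overline{R}\otimes_{\overline{R}}N=0$. *)

(* Defs.v *)
From HB Require Import structures.
From mathcomp Require Import all_boot all_order all_algebra.
Set Implicit Arguments. Unset Strict Implicit. Unset Printing Implicit Defensive.
Import GRing.Theory.
Local Open Scope ring_scope.

Definition mult_set (R : pzRingType) (S : R -> Prop) : Prop :=
  [/\ S 1, ~ S 0 & forall s t, S s -> S t -> S (s * t)].

Definition inverts (R B : pzRingType) (S : R -> Prop) (psi : R -> B) : Prop :=
  forall s, S s -> exists y : B, psi s * y = 1 /\ y * psi s = 1.

(* (A, phi) is the universal localization R<S^{-1}> = R<X_S>/I_S,
   characterized by its universal property. *)
Definition univ_loc (R A : pzRingType) (S : R -> Prop) (phi : {rmorphism R -> A}) : Prop :=
  inverts S phi /\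
  forall (B : pzRingType) (psi : {rmorphism R -> B}), inverts S psi ->
    exists h : {rmorphism A -> B},
      (forall r, h (phi r) = psi r) /\
      forall h' : {rmorphism A -> B}, (forall r, h' (phi r) = psi r) -> forall a, h' a = h a.

Inductive loc_kind := LeftLoc | TwoSidedLoc .

(* S is left localizable (k = LeftLoc) / localizable (k = TwoSidedLoc):
   R<S^{-1}> <> 0, every element is x_s r, and (two-sided case) also r x_s. *)
Definition localizable (R A : pzRingType) (k : loc_kind) (S : R -> Prop) (phi : R -> A) : Prop :=
  [/\ (1 : A) <> 0,
      (forall a : A, exists s r (x : A),
          [/\ S s, x * phi s = 1, phi s * x = 1 & a = x * phi r]) &
      (k = TwoSidedLoc -> forall a : A, exists s r (x : A),
          [/\ S s, x * phi s = 1, phi s * x = 1 & a = phi r * x])].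

Definition ass (R A : pzRingType) (phi : R -> A) : R -> Prop := fun r => phi r = 0.

Definition img_set (R Rb : pzRingType) (pi : R -> Rb) (S : R -> Prop) : Rb -> Prop :=
  fun y => exists s, S s /\ pi s = y.

Definition semilin_on (R K : pzRingType) (phi : R -> K) (M : lmodType R) (X : lmodType K)
  (P : M -> Prop) (f : M -> X) : Prop :=
  (forall x y, P x -> P y -> f (x + y) = f x + f y) /\
  (forall r x, P x -> f (r *: x) = phi r *: f x).

Definition klin (K : pzRingType) (T X : lmodType K) (g : T -> X) : Prop :=
  (forall x y, g (x + y) = g x + g y) /\ (forall a x, g (a *: x) = a *: g x).

Definition submod (R : pzRingType) (M : lmodType R) (P : M -> Prop) : Prop :=
  [/\ P 0, (forall x y, P x -> P y -> P (x + y)) & (forall r x, P x -> P (r *: x))].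

Definition ideal_mul (R : pzRingType) (M : lmodType R) (I : R -> Prop) (P : M -> Prop) : M -> Prop :=
  fun x => exists s : seq (R * M),
    (forall p, p \in s -> I p.1 /\ P p.2) /\ x = \sum_(p <- s) p.1 *: p.2.

(* (T, iota) is the tensor product K (x)_R (P/Q), with K viewed as a right
   R-module via phi and P, Q (Q subset P) submodules of M: universal property
   of extension of scalars applied to the quotient module P/Q. *)
Definition is_tensor_quot (R K : pzRingType) (phi : R -> K) (M : lmodType R)
  (P Q : M -> Prop) (T : lmodType K) (iota : M -> T) : Prop :=
  [/\ semilin_on phi P iota,
      (forall x, Q x -> iota x = 0) &
      forall (X : lmodType K) (f : M -> X),
        semilin_on phi P f -> (forall x, Q x -> f x = 0) ->
        exists g : T -> X,
          [/\ klin g, (forall x, P x -> g (iota x) = f x) &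
              forall g' : T -> X, klin g' -> (forall x, P x -> g' (iota x) = f x) ->
                forall t, g' t = g t]].

(* (T, iota) is S^{-1}M := S^{-1}R (x)_R M *)
Definition is_tensor (R K : pzRingType) (phi : R -> K) (M : lmodType R)
  (T : lmodType K) (iota : M -> T) : Prop :=
  is_tensor_quot phi (fun _ : M => True) (fun x => x = 0) iota.

Definition loc_functor_exact (R A : pzRingType) (phi : R -> A) : Prop :=
  forall (M1 M2 M3 : lmodType R) (f : M1 -> M2) (g : M2 -> M3),
    semilin_on id (fun _ => True) f -> semilin_on id (fun _ => True) g ->
    (forall y, g y = 0 <-> exists x, f x = y) ->
    forall (T1 T2 T3 : lmodType A) (i1 : M1 -> T1) (i2 : M2 -> T2) (i3 : M3 -> T3),
      is_tensor phi i1 -> is_tensor phi i2 -> is_tensor phi i3 ->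
      forall (F : T1 -> T2) (G : T2 -> T3), klin F -> klin G ->
        (forall m, F (i1 m) = i2 (f m)) -> (forall m, G (i2 m) = i3 (g m)) ->
        forall t, G t = 0 <-> exists u, F u = t.

(* The module P/Q (an Rb-module via pi : R -> Rb, Q killing ker pi) is
   Sbar-torsion: Sbar^{-1}Rb (x)_Rb (P/Q) = 0, where (B, psi) = Sbar^{-1}Rb. *)
Definition torsion_quot (R Rb B : pzRingType) (pi : R -> Rb) (psi : Rb -> B)
  (M : lmodType R) (P Q : M -> Prop) : Prop :=
  forall (T : lmodType B) (iota : M -> T),
    is_tensor_quot (fun r => psi (pi r)) P Q iota -> forall t : T, t = 0.

(* Main.v *)
Require Import Defs.
From HB Require Import structures.
From mathcomp Require Import all_boot all_order all_algebra.
From mathcomp Require Import boolp.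
Set Implicit Arguments. Unset Strict Implicit. Unset Printing Implicit Defensive.
Import GRing.Theory.
Local Open Scope ring_scope.

Lemma sub4 (V : zmodType) (a b c d : V) : a - b - (c - d) = (a - c) - (b - d).
Proof. by rewrite !opprB !addrA [a - b + d]addrAC [a - c + d]addrAC addrAC. Qed.

Section IdealMul.
Variables (R : pzRingType) (M : lmodType R) (I : R -> Prop) (P : M -> Prop).

Lemma im_ind (Z : M -> Prop) : Z 0 -> (forall x y, Z x -> Z y -> Z (x + y)) ->
  (forall a p, I a -> P p -> Z (a *: p)) -> forall x, ideal_mul I P x -> Z x.
Proof.
move=> Z0 ZD Z1 x [s [Hs ->]].
elim: s Hs => [|p s IH] Hs; first by rewrite big_nil.
rewrite big_cons; apply: ZD; last by apply: IH => q qs; apply: Hs; rewrite inE qs orbT.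
by have [] := Hs p (mem_head _ _); apply: Z1.
Qed.

Lemma im0 : ideal_mul I P 0.
Proof. by exists [::]; split => //; rewrite big_nil. Qed.

Lemma imD x y : ideal_mul I P x -> ideal_mul I P y -> ideal_mul I P (x + y).
Proof.
move=> [s [Hs ->]] [t [Ht ->]]; exists (s ++ t); split; last by rewrite big_cat.
by move=> p; rewrite mem_cat => /orP [] ?; [apply: Hs | apply: Ht].
Qed.

Lemma im1 a p : I a -> P p -> ideal_mul I P (a *: p).
Proof.
by move=> Ia Pp; exists [:: (a, p)]; split; [move=> q; rewrite inE => /eqP -> | rewrite big_seq1].
Qed.

Lemma imZ r x : (forall a, I a -> I (r * a)) -> ideal_mul I P x -> ideal_mul I P (r *: x).
Proof.
move=> HI Hx; apply: (im_ind (Z := fun x => ideal_mul I P (r *: x))) Hx.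
  by rewrite scaler0; apply: im0.
  by move=> x1 y1 h1 h2; rewrite scalerDr; apply: imD.
by move=> a p Ia Pp; rewrite scalerA; apply: im1 => //; apply: HI.
Qed.

Lemma im_sub : submod P -> forall x, ideal_mul I P x -> P x.
Proof.
case=> P0 PD PZ x; apply: (im_ind (Z := P)) => //; by move=> a p _; apply: PZ.
Qed.

End IdealMul.

Lemma im_mono (R : pzRingType) (M : lmodType R) (I I' : R -> Prop) (P P' : M -> Prop) :
  (forall a, I a -> I' a) -> (forall p, P p -> P' p) ->
  forall x, ideal_mul I P x -> ideal_mul I' P' x.
Proof.
move=> HI HP x; apply: (im_ind (Z := ideal_mul I' P')); first exact: im0.
  by move=> *; apply: imD.
by move=> a p Ia Pp; apply: im1; [apply: HI | apply: HP].
Qed.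



Section Ore.
Variables (R K : pzRingType) (S : R -> Prop) (phi : {rmorphism R -> K}).
Hypothesis S1 : S 1.
Hypothesis SM : forall s t, S s -> S t -> S (s * t).
Hypothesis Hinv : forall s, S s -> exists y, phi s * y = 1 /\ y * phi s = 1.
Hypothesis Hfrac : forall a : K, exists s r, S s /\ phi s * a = phi r.

Lemma cancel_l s (x y : K) : S s -> phi s * x = phi s * y -> x = y.
Proof.
move=> /Hinv [z [_ h]] e; by rewrite -[x]mul1r -[y]mul1r -h -!mulrA e.
Qed.

Lemma cancel_r s (x y : K) : S s -> x * phi s = y * phi s -> x = y.
Proof.
move=> /Hinv [z [h _]] e; by rewrite -[x]mulr1 -[y]mulr1 -h !mulrA e.
Qed.

Lemma ore s r : S s -> exists s' r', S s' /\ phi s' * phi r = phi r' * phi s.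
Proof.
move=> Ss; have [y [h1 h2]] := Hinv Ss.
have [s' [r' [Ss' e]]] := Hfrac (phi r * y).
exists s', r'; split => //; by rewrite -e -!mulrA h2 mulr1.
Qed.

Lemma common (a b : K) : exists s r r', [/\ S s, phi s * a = phi r & phi s * b = phi r'].
Proof.
have [s1 [r1 [S1' e1]]] := Hfrac a; have [s2 [r2 [S2 e2]]] := Hfrac b.
have [s' [r' [Ss' e]]] := ore s2 S1'.
exists (s' * s2), (r' * r1), (s' * r2); split.
- exact: SM.
- by rewrite rmorphM e -mulrA e1 rmorphM.
- by rewrite rmorphM -mulrA e2 rmorphM.
Qed.

Variables (N : lmodType R) (P Q : N -> Prop).
Hypothesis Psub : submod P.
Hypothesis Qsub : submod Q.
Hypothesis QP : forall x, Q x -> P x.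

Definition kerp := fun r : R => phi r = 0.
Definition Dm (x : N) := exists q z, [/\ Q q, ideal_mul kerp P z & x = q + z].
Definition Tor (x : N) := P x /\ exists t, S t /\ Dm (t *: x).

Lemma P0 : P 0. Proof. by case: Psub. Qed.
Lemma PD x y : P x -> P y -> P (x + y). Proof. by case: Psub => _ h _; apply: h. Qed.
Lemma PZ r x : P x -> P (r *: x). Proof. by case: Psub => _ _ h; apply: h. Qed.
Lemma PN x : P x -> P (- x). Proof. by move=> h; rewrite -scaleN1r; apply: PZ. Qed.
Lemma PB x y : P x -> P y -> P (x - y). Proof. by move=> *; apply: PD => //; apply: PN. Qed.

Lemma Q0 : Q 0. Proof. by case: Qsub. Qed.
Lemma QD x y : Q x -> Q y -> Q (x + y). Proof. by case: Qsub => _ h _; apply: h. Qed.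
Lemma QZ r x : Q x -> Q (r *: x). Proof. by case: Qsub => _ _ h; apply: h. Qed.

Lemma kerM r a : kerp a -> kerp (r * a).
Proof. by rewrite /kerp rmorphM => ->; rewrite mulr0. Qed.

Lemma D0 : Dm 0.
Proof. exists 0, 0; split; [exact: Q0 | exact: im0 | by rewrite addr0]. Qed.

Lemma DD x y : Dm x -> Dm y -> Dm (x + y).
Proof.
move=> [q [z [hq hz ->]]] [q' [z' [hq' hz' ->]]].
exists (q + q'), (z + z'); split; [exact: QD | exact: imD | ].
by rewrite addrACA.
Qed.

Lemma DZ r x : Dm x -> Dm (r *: x).
Proof.
move=> [q [z [hq hz ->]]]; exists (r *: q), (r *: z); split.
- exact: QZ.
- by apply: imZ => // a; apply: kerM.
- by rewrite scalerDr.
Qed.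

Lemma DN x : Dm x -> Dm (- x). Proof. by move=> h; rewrite -scaleN1r; apply: DZ. Qed.
Lemma DB x y : Dm x -> Dm y -> Dm (x - y). Proof. by move=> *; apply: DD => //; apply: DN. Qed.

Lemma D_P x : Dm x -> P x.
Proof. move=> [q [z [hq hz ->]]]; apply: PD; [exact: QP | exact: im_sub hz]. Qed.

Lemma DQ x : Q x -> Dm x.
Proof. by move=> h; exists x, 0; split => //; [exact: im0 | rewrite addr0]. Qed.

Lemma Dker r p : phi r = 0 -> P p -> Dm (r *: p).
Proof. by move=> h hp; exists 0, (r *: p); split; [exact: Q0 | exact: im1 | rewrite add0r]. Qed.

Lemma Dkerdiff r r' p : phi r = phi r' -> P p -> Dm (r *: p - r' *: p).
Proof. by move=> e hp; rewrite -scalerBl; apply: Dker => //; rewrite rmorphB e subrr. Qed.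

Lemma Tor_D x : Dm x -> Tor x.
Proof. by move=> h; split; [exact: D_P | exists 1; split => //; rewrite scale1r]. Qed.

Lemma Tor_P x : Tor x -> P x. Proof. by case. Qed.

Lemma TorD x y : Tor x -> Tor y -> Tor (x + y).
Proof.
move=> [Px [t1 [St1 D1]]] [Py [t2 [St2 D2]]]; split; first exact: PD.
have [s' [r' [Ss' e]]] := ore t1 St2.
exists (s' * t1); split; first exact: SM.
have -> : (s' * t1) *: (x + y) = s' *: (t1 *: x) + (r' *: (t2 *: y) + ((s' * t1) *: y - (r' * t2) *: y)).
  by rewrite scalerDr !scalerA [(r' * t2) *: y + _]addrC subrK.
apply: DD; first exact: DZ.
apply: DD; first exact: DZ.
by apply: Dkerdiff => //; rewrite !rmorphM e.
Qed.

Lemma TorZ r x : Tor x -> Tor (r *: x).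
Proof.
move=> [Px [t [St Dt]]]; split; first exact: PZ.
have [s' [r' [Ss' e]]] := ore r St.
exists s'; split => //.
have -> : s' *: (r *: x) = r' *: (t *: x) + ((s' * r) *: x - (r' * t) *: x).
  by rewrite !scalerA addrC subrK.
apply: DD; first exact: DZ.
by apply: Dkerdiff => //; rewrite !rmorphM e.
Qed.

Lemma TorN x : Tor x -> Tor (- x). Proof. by move=> h; rewrite -scaleN1r; apply: TorZ. Qed.
Lemma TorB x y : Tor x -> Tor y -> Tor (x - y). Proof. by move=> *; apply: TorD => //; apply: TorN. Qed.
Lemma Tor0 : Tor 0. Proof. apply: Tor_D; exact: D0. Qed.

Lemma Tor_cancel s x : S s -> P x -> Tor (s *: x) -> Tor x.
Proof.
move=> Ss Px [_ [t [St Dt]]]; split => //; exists (t * s); split; first exact: SM.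
by rewrite -scalerA.
Qed.

Lemma Tor_eqD x y : Tor y -> Dm (x - y) -> Tor x.
Proof.
move=> Ty Dxy; have -> : x = y + (x - y) by rewrite addrC subrK.
by apply: TorD => //; apply: Tor_D.
Qed.

Lemma Tor_kerdiff u v u' v' p q : P p -> P q -> phi u = phi u' -> phi v = phi v' ->
  Tor (u' *: p - v' *: q) -> Tor (u *: p - v *: q).
Proof.
move=> Pp Pq eu ev T; apply: (Tor_eqD T).
have -> : u *: p - v *: q - (u' *: p - v' *: q) = (u *: p - u' *: p) - (v *: q - v' *: q).
  by rewrite sub4.
by apply: DB; apply: Dkerdiff.
Qed.

Definition Rel (c d : K * N) := [/\ P c.2, P d.2 & exists s r r',
  [/\ S s, phi s * c.1 = phi r, phi s * d.1 = phi r' & Tor (r *: c.2 - r' *: d.2)]].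

Lemma indep c d s r r' : Rel c d -> S s -> phi s * c.1 = phi r -> phi s * d.1 = phi r' ->
  Tor (r *: c.2 - r' *: d.2).
Proof.
case=> Pc Pd [t [r1 [r1' [St e1 e1' T]]]] Ss e e'.
have [s' [r'' [Ss' E]]] := ore s St.
apply: (Tor_cancel Ss'); first by apply: PB; apply: PZ.
rewrite scalerBr !scalerA.
apply: (Tor_kerdiff (u' := r'' * r1) (v' := r'' * r1')) => //.
- by rewrite !rmorphM -e mulrA E -mulrA e1.
- by rewrite !rmorphM -e' mulrA E -mulrA e1'.
- by rewrite -!scalerA -scalerBr; apply: TorZ.
Qed.

Lemma Rel_refl c : P c.2 -> Rel c c.
Proof.
move=> Pc; have [s [r [Ss e]]] := Hfrac c.1.
by split => //; exists s, r, r; split => //; rewrite subrr; apply: Tor0.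
Qed.

Lemma Rel_sym c d : Rel c d -> Rel d c.
Proof.
case=> Pc Pd [s [r [r' [Ss e e' T]]]]; split => //; exists s, r', r; split => //.
by rewrite -opprB; apply: TorN.
Qed.

Lemma common3 (a b c : K) : exists s r1 r2 r3,
  [/\ S s, phi s * a = phi r1, phi s * b = phi r2 & phi s * c = phi r3].
Proof.
have [s0 [ra [rb [S0 ea eb]]]] := common a b.
have [y [hy1 hy2]] := Hinv S0.
have [w [u [rc [Sw eu ec]]]] := common y c.
have E : phi w = phi u * phi s0 by rewrite -eu -mulrA hy2 mulr1.
exists w, (u * ra), (u * rb), rc; split => //.
- by rewrite E -mulrA ea rmorphM.
- by rewrite E -mulrA eb rmorphM.
Qed.

Lemma Rel_trans c d e : Rel c d -> Rel d e -> Rel c e.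
Proof.
move=> H1 H2; case: (H1) => Pc Pd _; case: (H2) => _ Pe _.
have [s [r1 [r2 [r3 [Ss e1 e2 e3]]]]] := common3 c.1 d.1 e.1.
split => //; exists s, r1, r3; split => //.
have -> : r1 *: c.2 - r3 *: e.2 = (r1 *: c.2 - r2 *: d.2) + (r2 *: d.2 - r3 *: e.2)
  by rewrite addrA subrK.
by apply: TorD; [apply: (indep H1 Ss e1 e2) | apply: (indep H2 Ss e2 e3)].
Qed.

Lemma Rel_by c d : P c.2 -> P d.2 ->
  (forall s r r', S s -> phi s * c.1 = phi r -> phi s * d.1 = phi r' -> Tor (r *: c.2 - r' *: d.2)) ->
  Rel c d.
Proof.
move=> Pc Pd H; have [s [r [r' [Ss e e']]]] := common c.1 d.1.
by split => //; exists s, r, r'; split => //; apply: H Ss e e'.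
Qed.

Definition Val s (e : K * N) m := exists r, phi s * e.1 = phi r /\ Tor (r *: e.2 - m).

Lemma Val_base e s r : P e.2 -> phi s * e.1 = phi r -> Val s e (r *: e.2).
Proof. by move=> Pe h; exists r; split => //; rewrite subrr; apply: Tor0. Qed.

Lemma Val_any e s m r' : P e.2 -> Val s e m -> phi s * e.1 = phi r' -> Tor (r' *: e.2 - m).
Proof.
move=> Pe [r [e1 T]] e2.
have -> : r' *: e.2 - m = (r' *: e.2 - r *: e.2) + (r *: e.2 - m) by rewrite addrA subrK.
by apply: TorD => //; apply: Tor_D; apply: Dkerdiff => //; rewrite -e1 -e2.
Qed.

Lemma Rel_by_val c d : P c.2 -> P d.2 ->
  (forall s r r', S s -> phi s * c.1 = phi r -> phi s * d.1 = phi r' ->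
     exists m, Val s c m /\ Val s d m) -> Rel c d.
Proof.
move=> Pc Pd H; apply: Rel_by => // s r r' Ss e e'.
have [m [V1 V2]] := H s r r' Ss e e'.
have -> : r *: c.2 - r' *: d.2 = (r *: c.2 - m) - (r' *: d.2 - m) by rewrite sub4 subrr subr0.
by apply: TorB; [apply: (Val_any Pc V1) | apply: (Val_any Pd V2)].
Qed.

Lemma Val_rel c d s m r' : Rel c d -> S s -> Val s c m -> phi s * d.1 = phi r' -> Val s d m.
Proof.
move=> H Ss [r [e T]] e'; exists r'; split => //.
have := indep H Ss e e' => T2.
have -> : r' *: d.2 - m = (r *: c.2 - m) - (r *: c.2 - r' *: d.2) by rewrite sub4 subrr sub0r opprB.
exact: TorB.
Qed.

Lemma exinv (r : R) : exists y : K, S r -> phi r * y = 1 /\ y * phi r = 1.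
Proof.
case: (pselect (S r)) => h; last by exists 0.
by have [y hy] := Hinv h; exists y.
Qed.

Definition invp r := projT1 (cid (exinv r)).

Lemma invpP r : S r -> phi r * invp r = 1 /\ invp r * phi r = 1.
Proof. by rewrite /invp; case: cid => y /= h; apply: h. Qed.

Lemma common' (a b : K) : exists t : R * R * R,
  [/\ S t.1.1, phi t.1.1 * a = phi t.1.2 & phi t.1.1 * b = phi t.2].
Proof. by have [s [r [r' h]]] := common a b; exists (s, r, r'). Qed.

Definition addc (c d : K * N) : K * N :=
  let t := projT1 (cid (common' c.1 d.1)) in (invp t.1.1, t.1.2 *: c.2 + t.2 *: d.2).

Arguments addc : simpl never.

Lemma addc_spec c d : exists s r r', [/\ S s, phi s * c.1 = phi r, phi s * d.1 = phi r'
  & addc c d = (invp s, r *: c.2 + r' *: d.2)].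
Proof. by rewrite /addc; case: cid => [[[s r] r']] /= [h1 h2 h3]; exists s, r, r'. Qed.

Lemma addc_P c d : P c.2 -> P d.2 -> P (addc c d).2.
Proof. by have [s [r [r' [_ _ _ ->]]]] := addc_spec c d => /= *; apply: PD; apply: PZ. Qed.

Lemma addc_denk c d (k : K) u : k * (addc c d).1 = phi u -> exists r0 r0',
  [/\ k * c.1 = phi (u * r0), k * d.1 = phi (u * r0') & (addc c d).2 = r0 *: c.2 + r0' *: d.2].
Proof.
have [s0 [r0 [r0' [S0 e1 e2 ->]]]] := addc_spec c d => /= H.
have [_ h] := invpP S0.
exists r0, r0'; split => //.
- by rewrite -[c.1]mul1r -h !mulrA H -mulrA e1 -rmorphM.
- by rewrite -[d.1]mul1r -h !mulrA H -mulrA e2 -rmorphM.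
Qed.

Lemma addc_den c d s u : phi s * (addc c d).1 = phi u -> exists r0 r0',
  [/\ phi s * c.1 = phi (u * r0), phi s * d.1 = phi (u * r0') & (addc c d).2 = r0 *: c.2 + r0' *: d.2].
Proof. exact: addc_denk. Qed.

Lemma Val_addc c d s m n u : P c.2 -> P d.2 -> Val s c m -> Val s d n ->
  phi s * (addc c d).1 = phi u -> Val s (addc c d) (m + n).
Proof.
move=> Pc Pd V1 V2 H; have [r0 [r0' [e1 e2 E]]] := addc_den H.
exists u; split => //; rewrite E scalerDr !scalerA opprD addrACA.
by apply: TorD; [apply: (Val_any Pc V1) | apply: (Val_any Pd V2)].
Qed.

Lemma Rel_scale c d a : Rel c d -> Rel (a * c.1, c.2) (a * d.1, d.2).
Proof.
move=> H; case: (H) => Pc Pd _; apply: Rel_by => //= s r r' Ss e e'.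
have [w [r1 [r1' [Sw e1 e1']]]] := common c.1 d.1.
have T := indep H Sw e1 e1'.
have [y [hy1 hy2]] := Hinv Sw.
have [t [b [St eb]]] := Hfrac (phi s * a * y).
have E : phi t * phi s * a = phi b * phi w by rewrite -eb -!mulrA hy2 mulr1.
apply: (Tor_cancel St); first by apply: PB; apply: PZ.
rewrite scalerBr !scalerA.
apply: (Tor_kerdiff (u' := b * r1) (v' := b * r1')) => //.
- by rewrite !rmorphM -e1 -e !mulrA E.
- by rewrite !rmorphM -e1' -e' !mulrA E.
- by rewrite -!scalerA -scalerBr; apply: TorZ.
Qed.

Lemma Val_zero s : Val s (0, 0) 0.
Proof. by exists 0; split; [rewrite mulr0 rmorph0 | rewrite scaler0 subrr; apply: Tor0]. Qed.

Lemma Val_tor s e m m' : Val s e m -> Dm (m - m') -> Val s e m'.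
Proof.
move=> [r [h T]] D; exists r; split => //.
have -> : r *: e.2 - m' = (r *: e.2 - m) + (m - m') by rewrite addrA subrK.
by apply: TorD => //; apply: Tor_D.
Qed.

Lemma addc_compat c c' d d' : Rel c c' -> Rel d d' -> Rel (addc c d) (addc c' d').
Proof.
move=> H1 H2; case: (H1) => Pc Pc' _; case: (H2) => Pd Pd' _.
apply: Rel_by_val; try exact: addc_P.
move=> s u u' Ss e e'.
have [r0 [r0' [e1 e2 _]]] := addc_den e.
have [q0 [q0' [f1 f2 _]]] := addc_den e'.
exists ((u * r0) *: c.2 + (u * r0') *: d.2); split.
- by apply: (Val_addc Pc Pd _ _ e); apply: Val_base.
- apply: (Val_addc Pc' Pd' _ _ e').
  + by apply: (Val_rel H1 Ss _ f1); apply: Val_base.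
  + by apply: (Val_rel H2 Ss _ f2); apply: Val_base.
Qed.

Definition Ct := {X : K * N -> Prop | exists c, P c.2 /\ X = Rel c}.
HB.instance Definition _ := gen_eqMixin Ct.
HB.instance Definition _ := gen_choiceMixin Ct.

Definition normc (c : K * N) := if `[< P c.2 >] then c else (0, 0).
Lemma normcP c : P (normc c).2.
Proof. by rewrite /normc; case: asboolP => //= _; apply: P0. Qed.
Lemma normc_id c : P c.2 -> normc c = c.
Proof. by rewrite /normc; case: asboolP. Qed.

Definition cl (c : K * N) : Ct := exist _ (Rel (normc c)) (ex_intro _ (normc c) (conj (normcP c) erefl)).
Definition rep (X : Ct) : K * N := projT1 (cid (proj2_sig X)).
Lemma repP X : P (rep X).2 /\ sval X = Rel (rep X).
Proof. by rewrite /rep; case: cid => c [h1 h2]. Qed.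
Lemma repV X : P (rep X).2. Proof. by case: (repP X). Qed.

Lemma Ct_eq (X Y : Ct) : sval X = sval Y -> X = Y.
Proof. case: X => x hx; case: Y => y hy /= E; subst y; congr exist; exact: Prop_irrelevance. Qed.

Lemma cl_rep X : cl (rep X) = X.
Proof. by apply: Ct_eq; rewrite /= normc_id; [case: (repP X) | apply: repV]. Qed.

Lemma cl_eq c d : P c.2 -> P d.2 -> Rel c d -> cl c = cl d.
Proof.
move=> Pc Pd H; apply: Ct_eq => /=; rewrite !normc_id //.
apply: funext => e; apply: propext; split => h.
- exact: Rel_trans (Rel_sym H) h.
- exact: Rel_trans H h.
Qed.

Lemma cl_inj c d : P c.2 -> P d.2 -> cl c = cl d -> Rel c d.
Proof.
move=> Pc Pd /(congr1 sval) /=; rewrite !normc_id // => E.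
by have : Rel d d := Rel_refl Pd; rewrite -E.
Qed.

Lemma rep_cl c : P c.2 -> Rel (rep (cl c)) c.
Proof. by move=> Pc; apply: cl_inj => //; [apply: repV | rewrite cl_rep]. Qed.

Definition zeroC : Ct := cl (0, 0).
Definition scaleC (a : K) (X : Ct) : Ct := cl (a * (rep X).1, (rep X).2).
Definition oppC (X : Ct) : Ct := scaleC (-1) X.
Definition addC (X Y : Ct) : Ct := cl (addc (rep X) (rep Y)).

Lemma P00 : P (0 : K * N).2. Proof. exact: P0. Qed.

Lemma addCA : associative addC.
Proof.
move=> X Y Z; rewrite /addC.
set x := rep X; set y := rep Y; set z := rep Z.
have Px : P x.2 := repV X; have Py : P y.2 := repV Y; have Pz : P z.2 := repV Z.
have Pxy := addc_P Px Py; have Pyz := addc_P Py Pz.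
apply: cl_eq; try apply: addc_P; try apply: repV; try done; apply: Rel_sym.
apply: (Rel_trans (d := addc (addc x y) z)).
  by apply: addc_compat; [apply: rep_cl | apply: Rel_refl].
apply: (Rel_trans (d := addc x (addc y z))); last first.
  by apply: addc_compat; [apply: Rel_refl | apply: Rel_sym; apply: rep_cl].
apply: Rel_by_val; try (apply: addc_P; try apply: addc_P; done).
move=> s u u' Ss e e'.
have [a0 [az [ea ez _]]] := addc_den e.
have [ax [ay [ex ey _]]] := addc_den ea.
have [bx [byz [fx fyz _]]] := addc_den e'.
exists (((u * a0) * ax) *: x.2 + ((u * a0) * ay) *: y.2 + (u * az) *: z.2); split.
- apply: (Val_addc Pxy Pz _ _ e); last by apply: Val_base.
  by apply: (Val_addc Px Py _ _ ea); apply: Val_base.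
- rewrite -addrA; apply: (Val_addc Px Pyz _ _ e'); first by apply: Val_base.
  by apply: (Val_addc Py Pz _ _ fyz); apply: Val_base.
Qed.

Lemma addCC : commutative addC.
Proof.
move=> X Y; rewrite /addC.
set x := rep X; set y := rep Y.
have Px : P x.2 := repV X; have Py : P y.2 := repV Y.
apply: cl_eq; try apply: addc_P; try done.
apply: Rel_by_val; try apply: addc_P; try done.
move=> s u u' Ss e e'.
have [ax [ay [ex ey _]]] := addc_den e.
exists ((u * ax) *: x.2 + (u * ay) *: y.2); split.
- by apply: (Val_addc Px Py _ _ e); apply: Val_base.
- by rewrite addrC; apply: (Val_addc Py Px _ _ e'); apply: Val_base.
Qed.

Lemma add0C : left_id zeroC addC.
Proof.
move=> X; rewrite /addC /zeroC.
set x := rep X; have Px : P x.2 := repV X.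
rewrite -[RHS]cl_rep; apply: cl_eq; try apply: addc_P; try apply: repV; try done.
apply: (Rel_trans (d := addc (0, 0) x)).
  by apply: addc_compat; [apply: rep_cl; apply: P00 | apply: Rel_refl].
apply: Rel_by_val; try apply: addc_P; try done; first exact: P00.
move=> s u u' Ss e e'.
have [a0 [ax [e0 ex _]]] := addc_den e.
exists ((u * ax) *: x.2); split; last by apply: Val_base.
rewrite -[X in Val _ _ X]add0r; apply: (Val_addc P00 Px _ _ e); first exact: Val_zero.
exact: Val_base.
Qed.

Lemma addNC : left_inverse zeroC oppC addC.
Proof.
move=> X; rewrite /addC /zeroC /oppC /scaleC.
set x := rep X; have Px : P x.2 := repV X.
have Pn : P (- 1 * x.1, x.2).2 := Px.
apply: cl_eq; try apply: addc_P; try apply: repV; try done; first exact: P00.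
apply: (Rel_trans (d := addc (- 1 * x.1, x.2) x)).
  by apply: addc_compat; [apply: rep_cl | apply: Rel_refl].
apply: Rel_by_val; try apply: addc_P; try done; first exact: P00.
move=> s u u' Ss e e'.
have [an [ax [en ex _]]] := addc_den e.
exists 0; split; last exact: Val_zero.
apply: (Val_tor (m := (u * an) *: x.2 + (u * ax) *: x.2)).
  by apply: (Val_addc Pn Px _ _ e); apply: Val_base.
rewrite subr0 -scalerDl; apply: Dker => //.
by rewrite rmorphD -en -ex /= mulrA mulrN1 mulNr addNr.
Qed.

HB.instance Definition _ := GRing.isZmodule.Build Ct addCA addCC add0C addNC.

Lemma scaleCA a b (X : Ct) : scaleC a (scaleC b X) = scaleC (a * b) X.
Proof.
rewrite /scaleC; set x := rep X; have Px : P x.2 := repV X.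
apply: cl_eq; try apply: repV; try done.
apply: (Rel_trans (d := (a * (b * x.1), x.2))).
  by apply: (Rel_scale a (rep_cl _)).
by rewrite mulrA; apply: Rel_refl.
Qed.

Lemma scale1C : left_id 1 scaleC.
Proof. by move=> X; rewrite /scaleC mul1r -surjective_pairing cl_rep. Qed.

Lemma scaleCDr : right_distributive scaleC addC.
Proof.
move=> a X Y; rewrite /scaleC /addC.
set x := rep X; set y := rep Y.
have Px : P x.2 := repV X; have Py : P y.2 := repV Y.
have Pxy := addc_P Px Py.
apply: cl_eq; try apply: addc_P; try apply: repV; try done.
apply: (Rel_trans (d := (a * (addc x y).1, (addc x y).2))).
  by apply: (Rel_scale a (rep_cl _)).
apply: (Rel_trans (d := addc (a * x.1, x.2) (a * y.1, y.2))); last first.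
  by apply: addc_compat; apply: Rel_sym; apply: rep_cl.
apply: Rel_by_val => //; first by apply: addc_P.
move=> s u u' Ss e e'.
rewrite /= mulrA in e.
have [r0 [r0' [e1 e2 E]]] := addc_denk e.
exists ((u * r0) *: x.2 + (u * r0') *: y.2); split.
- exists u; split; first by rewrite /= mulrA.
  by rewrite E /= scalerDr !scalerA subrr; apply: Tor0.
- have Pax : P (a * x.1, x.2).2 := Px; have Pay : P (a * y.1, y.2).2 := Py.
  by apply: (Val_addc Pax Pay _ _ e'); apply: Val_base => //; rewrite /= mulrA.
Qed.

Lemma scaleCDl (X : Ct) : {morph scaleC^~ X : a b / a + b >-> addC a b}.
Proof.
move=> a b; rewrite /scaleC /addC.
set x := rep X; have Px : P x.2 := repV X.
apply: cl_eq; try apply: addc_P; try apply: repV; try done.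
apply: (Rel_trans (d := addc (a * x.1, x.2) (b * x.1, x.2))); last first.
  by apply: addc_compat; apply: Rel_sym; apply: rep_cl.
apply: Rel_by_val => //; first by apply: addc_P.
move=> s u u' Ss e e'.
have [ra [rb [ea eb _]]] := addc_den e'.
exists ((u' * ra) *: x.2 + (u' * rb) *: x.2); split.
- exists u; split => //.
  rewrite -scalerDl -scalerBl; apply: Tor_D; apply: Dker => //.
  by rewrite rmorphB rmorphD -e -ea -eb /= mulrDl mulrDr subrr.
- have Pax : P (a * x.1, x.2).2 := Px; have Pbx : P (b * x.1, x.2).2 := Px.
  by apply: (Val_addc Pax Pbx _ _ e'); apply: Val_base.
Qed.

HB.instance Definition _ := GRing.Zmodule_isLmodule.Build K Ct scaleCA scale1C scaleCDr scaleCDl.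

Definition Cmod : lmodType K := Ct.

Definition iotaC (p : N) : Cmod := cl (1, p).

Lemma addCE (X Y : Cmod) : X + Y = addC X Y. Proof. by []. Qed.
Lemma scaleCE a (X : Cmod) : a *: X = scaleC a X. Proof. by []. Qed.
Lemma zeroCE : (0 : Cmod) = zeroC. Proof. by []. Qed.

Lemma P1 p : P p -> P (1 : K, p).2. Proof. by []. Qed.

Lemma cl_as c : P c.2 -> cl c = c.1 *: iotaC c.2.
Proof.
move=> Pc; rewrite scaleCE /scaleC /iotaC.
apply: cl_eq => //; first by apply: repV.
apply: Rel_sym; apply: (Rel_trans (Rel_scale c.1 (rep_cl (P1 Pc)))).
by rewrite /= mulr1 -surjective_pairing; apply: Rel_refl.
Qed.

Lemma iota_add x y : P x -> P y -> iotaC (x + y) = iotaC x + iotaC y.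
Proof.
move=> Px Py; rewrite addCE /addC /iotaC.
have Pxy : P (x + y) by apply: PD.
apply: cl_eq => //; first by apply: addc_P; apply: repV.
apply: Rel_sym; apply: (Rel_trans (d := addc (1, x) (1, y))).
  by apply: addc_compat; apply: rep_cl.
apply: Rel_by_val => //; first by apply: addc_P.
move=> s u u' Ss e e'.
have [r0 [r0' [e1 e2 _]]] := addc_den e.
exists ((u * r0) *: x + (u * r0') *: y); split.
- by apply: (Val_addc (P1 Px) (P1 Py) _ _ e); apply: Val_base.
- apply: (Val_tor (m := u' *: (x + y))); first by apply: Val_base.
  rewrite scalerDr opprD addrACA; apply: DD; apply: Dkerdiff => //.
  + by rewrite -e1 -e'.
  + by rewrite -e2 -e'.
Qed.

Lemma iota_scale r x : P x -> iotaC (r *: x) = phi r *: iotaC x.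
Proof.
move=> Px; rewrite scaleCE /scaleC /iotaC.
have Prx : P (r *: x) by apply: PZ.
apply: cl_eq => //; first by apply: repV.
apply: Rel_sym; apply: (Rel_trans (Rel_scale (phi r) (rep_cl (P1 Px)))).
apply: Rel_by => //= s r1 r2 Ss e e'.
rewrite scalerA; apply: Tor_D; apply: Dkerdiff => //.
by rewrite rmorphM -e -e' !mulr1.
Qed.

Lemma iota_Q x : Q x -> iotaC x = 0.
Proof.
move=> Qx; have Px := QP Qx; rewrite zeroCE /zeroC /iotaC.
apply: cl_eq => //; first exact: P00.
apply: Rel_by => //; first exact: P00.
move=> s r1 r2 Ss e e' /=; rewrite scaler0 subr0.
by apply: TorZ; apply: Tor_D; apply: DQ.
Qed.

Section UP.
Variables (X : lmodType K) (f : N -> X).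
Hypothesis fsl : semilin_on phi P f.
Hypothesis fQ : forall x, Q x -> f x = 0.

Lemma f_add x y : P x -> P y -> f (x + y) = f x + f y. Proof. by case: fsl => h _; apply: h. Qed.
Lemma f_scale r x : P x -> f (r *: x) = phi r *: f x. Proof. by case: fsl => _ h; apply: h. Qed.
Lemma f0 : f 0 = 0.
Proof. by apply: (addrI (f 0)); rewrite -f_add ?addr0 //; apply: P0. Qed.
Lemma f_sub x y : P x -> P y -> f (x - y) = f x - f y.
Proof.
move=> Px Py; apply: (addIr (f y)); rewrite -f_add ?subrK //; exact: PB.
Qed.

Lemma f_im z : ideal_mul kerp P z -> P z /\ f z = 0.
Proof.
apply: (im_ind (Z := fun z => P z /\ f z = 0)).
- by split; [apply: P0 | apply: f0].
- by move=> x y [Px fx] [Py fy]; split; [apply: PD | rewrite f_add // fx fy addr0].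
- move=> a p Ka Pp; split; first exact: PZ.
  by rewrite f_scale // Ka scale0r.
Qed.

Lemma f_D x : Dm x -> f x = 0.
Proof.
move=> [q [z [Qq Iz ->]]]; have [Pz fz] := f_im Iz.
by rewrite f_add; [rewrite fQ // fz addr0 | apply: QP | ].
Qed.

Lemma f_tor x : Tor x -> f x = 0.
Proof.
move=> [Px [t [St Dt]]]; have := f_D Dt; rewrite f_scale // => h.
have [_ h2] := invpP St.
by rewrite -[f x]scale1r -h2 -scalerA h scaler0.
Qed.

Lemma gwd c d : Rel c d -> c.1 *: f c.2 = d.1 *: f d.2.
Proof.
move=> [Pc Pd [s [r [r' [Ss e e' T]]]]].
have := f_tor T; rewrite f_sub ?f_scale //; try apply: PZ => //.
move=> /eqP; rewrite subr_eq0 => /eqP h.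
have [_ h2] := invpP Ss.
rewrite -[_ *: f c.2]scale1r -[_ *: f d.2]scale1r -h2 -!scalerA !scalerA.
by rewrite -!mulrA e e' -!scalerA h.
Qed.

Definition gC (Y : Cmod) : X := (rep Y).1 *: f (rep Y).2.

Lemma gC_cl c : P c.2 -> gC (cl c) = c.1 *: f c.2.
Proof. by move=> Pc; apply: gwd; apply: rep_cl. Qed.

Lemma gC_klin : klin gC.
Proof.
split.
- move=> Y Z; rewrite addCE /addC gC_cl; last by apply: addc_P; apply: repV.
  have [s0 [r0 [r0' [S0 e1 e2 ->]]]] := addc_spec (rep Y) (rep Z).
  rewrite /= f_add; try (apply: PZ; apply: repV).
  rewrite !f_scale; try apply: repV.
  have [_ h] := invpP S0.
  rewrite scalerDr !scalerA -e1 -e2 !mulrA h !mul1r.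
  by [].
- move=> a Y; rewrite scaleCE /scaleC gC_cl; last by apply: repV.
  by rewrite /= -scalerA.
Qed.

Lemma gC_iota p : P p -> gC (iotaC p) = f p.
Proof. by move=> Pp; rewrite /iotaC gC_cl //= scale1r. Qed.

Lemma gC_uniq (g' : Cmod -> X) : klin g' -> (forall x, P x -> g' (iotaC x) = f x) ->
  forall t, g' t = gC t.
Proof.
move=> [_ hs] hg t; rewrite -{1}(cl_rep t) cl_as; last by apply: repV.
by rewrite hs hg //; apply: repV.
Qed.

End UP.

Lemma C_tensor : is_tensor_quot phi P Q iotaC.
Proof.
split.
- by split; [apply: iota_add | move=> r x; apply: iota_scale].
- exact: iota_Q.
- move=> X f fsl fQ; exists (gC f); split.
  + exact: gC_klin.
  + by move=> x Px; apply: gC_iota.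
  + by move=> g' kg hg t; apply: gC_uniq.
Qed.

Lemma C_elems (t : Cmod) : exists s p, [/\ S s, P p & phi s *: t = iotaC p].
Proof.
rewrite -(cl_rep t); set c := rep t; have Pc : P c.2 := repV t.
have [s [r [Ss e]]] := Hfrac c.1.
exists s, (r *: c.2); split => //; first by apply: PZ.
by rewrite cl_as // scalerA e iota_scale.
Qed.

Lemma C_zero p : P p -> iotaC p = 0 -> Tor p.
Proof.
move=> Pp; rewrite zeroCE /iotaC /zeroC => /cl_inj H.
have := indep (H (P1 Pp) P00) S1 (r := 1) (r' := 0).
rewrite !rmorph1 mulr1 mulr0 rmorph0 scale1r scale0r subr0.
by apply.
Qed.

End Ore.



Lemma klin0 (K : pzRingType) (T X : lmodType K) (g : T -> X) : klin g -> g 0 = 0.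
Proof. by case=> h _; apply: (addrI (g 0)); rewrite -h !addr0. Qed.

Lemma klin_comp (K : pzRingType) (T X Y : lmodType K) (g : T -> X) (h : X -> Y) :
  klin g -> klin h -> klin (h \o g).
Proof. by move=> [g1 g2] [h1 h2]; split => *; rewrite /= ?g1 ?h1 ?g2 ?h2. Qed.

Lemma klin_id (K : pzRingType) (T : lmodType K) : klin (@id T).
Proof. by []. Qed.

Lemma tensor_props (R K : pzRingType) (S : R -> Prop) (phi : {rmorphism R -> K})
  (S1 : S 1) (SM : forall s t, S s -> S t -> S (s * t))
  (Hinv : forall s, S s -> exists y, phi s * y = 1 /\ y * phi s = 1)
  (Hfrac : forall a : K, exists s r, S s /\ phi s * a = phi r)
  (N : lmodType R) (P Q : N -> Prop) (Psub : submod P) (Qsub : submod Q)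
  (QP : forall x, Q x -> P x) (T : lmodType K) (io : N -> T) :
  is_tensor_quot phi P Q io ->
  (forall t : T, exists s p, [/\ S s, P p & phi s *: t = io p]) /\
  (forall p, P p -> io p = 0 -> Tor S phi P Q p).
Proof.
case=> sl hQ UP.
have HC := C_tensor S1 SM Hinv Hfrac Psub Qsub QP.
case: (HC) => slC hQC UPC.
have [g [gk gi _]] := UP _ _ slC hQC.
have [h [hk hi _]] := UPC _ _ sl hQ.
have [g0 [_ _ u0]] := UP _ _ sl hQ.
have hg : forall t, h (g t) = t.
  move=> t.
  have H1 : forall x, P x -> (h \o g) (io x) = io x by move=> x Px /=; rewrite gi // hi.
  have e1 := u0 (h \o g) (klin_comp gk hk) H1 t.
  have e2 := u0 id (@klin_id _ _) (fun x _ => erefl) t.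
  by rewrite /= in e1 e2; rewrite e1 -e2.
split.
- move=> t; have [s [p [Ss Pp e]]] := C_elems (g t).
  exists s, p; split => //.
  by rewrite -(hg t); case: hk => _ hs; rewrite -hs e hi.
- move=> p Pp e; apply: (@C_zero _ _ _ _ S1 SM Hinv Hfrac _ _ _ Psub Qsub QP p Pp).
  by rewrite -gi // e klin0.
Qed.



Section SubMod.
Variables (R : pzRingType) (M : lmodType R) (U : M -> Prop).
Hypothesis Us : submod U.

Definition SubT := {x : M | U x}.
HB.instance Definition _ := gen_eqMixin SubT.
HB.instance Definition _ := gen_choiceMixin SubT.

Lemma U0 : U 0. Proof. by case: Us. Qed.
Lemma UD x y : U x -> U y -> U (x + y). Proof. by case: Us => _ h _; apply: h. Qed.
Lemma UZ r x : U x -> U (r *: x). Proof. by case: Us => _ _ h; apply: h. Qed.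
Lemma UN x : U x -> U (- x). Proof. by move=> h; rewrite -scaleN1r; apply: UZ. Qed.

Definition sz : SubT := exist _ 0 U0.
Definition sadd (x y : SubT) : SubT := exist _ (sval x + sval y) (UD (proj2_sig x) (proj2_sig y)).
Definition sopp (x : SubT) : SubT := exist _ (- sval x) (UN (proj2_sig x)).
Definition sscale r (x : SubT) : SubT := exist _ (r *: sval x) (UZ r (proj2_sig x)).

Lemma sv_inj (x y : SubT) : sval x = sval y -> x = y.
Proof. case: x => x hx; case: y => y hy /= E; subst y; congr exist; exact: Prop_irrelevance. Qed.

Lemma saddA : associative sadd. Proof. by move=> *; apply: sv_inj; rewrite /= addrA. Qed.
Lemma saddC : commutative sadd. Proof. by move=> *; apply: sv_inj; rewrite /= addrC. Qed.
Lemma sadd0 : left_id sz sadd. Proof. by move=> *; apply: sv_inj; rewrite /= add0r. Qed.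
Lemma saddN : left_inverse sz sopp sadd. Proof. by move=> *; apply: sv_inj; rewrite /= addNr. Qed.
HB.instance Definition _ := GRing.isZmodule.Build SubT saddA saddC sadd0 saddN.
Lemma sscaleA a b v : sscale a (sscale b v) = sscale (a * b) v.
Proof. by apply: sv_inj; rewrite /= scalerA. Qed.
Lemma sscale1 : left_id 1 sscale. Proof. by move=> *; apply: sv_inj; rewrite /= scale1r. Qed.
Lemma sscaleDr : right_distributive sscale sadd. Proof. by move=> *; apply: sv_inj; rewrite /= scalerDr. Qed.
Lemma sscaleDl v : {morph sscale^~ v : a b / a + b >-> sadd a b}.
Proof. by move=> *; apply: sv_inj; rewrite /= scalerDl. Qed.
HB.instance Definition _ := GRing.Zmodule_isLmodule.Build R SubT sscaleA sscale1 sscaleDr sscaleDl.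
Definition SubMod : lmodType R := SubT.

Lemma sv_add (x y : SubMod) : sval (x + y) = sval x + sval y. Proof. by []. Qed.
Lemma sv_scale r (x : SubMod) : sval (r *: x) = r *: sval x. Proof. by []. Qed.
Lemma sv_0 : sval (0 : SubMod) = 0. Proof. by []. Qed.
End SubMod.

Section Helpers.
Variables (R : pzRingType) (M : lmodType R).

Lemma subT : submod (fun _ : M => True). Proof. by []. Qed.
Lemma sub0 : submod (fun x : M => x = 0).
Proof. by split => // [x y -> ->|r x ->]; rewrite ?addr0 ?scaler0. Qed.
Lemma subI (U V : M -> Prop) : submod U -> submod V -> submod (fun x => U x /\ V x).
Proof.
move=> [a1 b1 c1] [a2 b2 c2]; split => //.
- by move=> x y [] ? ? [] ? ?; split; [apply: b1 | apply: b2].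
- by move=> r x [] ? ?; split; [apply: c1 | apply: c2].
Qed.
Lemma sub_im (I : R -> Prop) (P : M -> Prop) : (forall r a, I a -> I (r * a)) -> submod (ideal_mul I P).
Proof.
move=> HI; split; first exact: im0.
- by move=> *; apply: imD.
- by move=> r x h; apply: imZ => // a; apply: HI.
Qed.
End Helpers.

Lemma sl_kill (R K : pzRingType) (phi : {rmorphism R -> K}) (M : lmodType R) (X : lmodType K)
  (P : M -> Prop) (f : M -> X) : submod P -> semilin_on phi P f ->
  forall z, ideal_mul (fun r => phi r = 0) P z -> f z = 0.
Proof.
move=> [P0 PD PZ] [fa fs] z Hz.
have f0 : f 0 = 0 by apply: (addrI (f 0)); rewrite -fa ?addr0.
have : P z /\ f z = 0; last by case.
apply: (im_ind (Z := fun z => P z /\ f z = 0)) Hz => [|x y [Px fx] [Py fy]|a p Ka Pp].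
- by [].
- by split; [apply: PD | rewrite fa // fx fy addr0].
- by split; [apply: PZ | rewrite fs // Ka scale0r].
Qed.

Lemma lin0 (R : pzRingType) (M M' : lmodType R) (g : M -> M') :
  semilin_on id (fun _ => True) g -> g 0 = 0.
Proof. by move=> [ga _]; apply: (addrI (g 0)); rewrite -ga ?addr0. Qed.

Lemma im_lift (R : pzRingType) (M M' : lmodType R) (g : M -> M') (I : R -> Prop) :
  semilin_on id (fun _ => True) g ->
  forall y, ideal_mul I (fun z => exists x, g x = z) y ->
  exists x, ideal_mul I (fun _ => True) x /\ g x = y.
Proof.
move=> gl; have g0 := lin0 gl; case: gl => ga gs.
apply: (im_ind (Z := fun y => exists x, ideal_mul I (fun _ => True) x /\ g x = y)).
- by exists 0; split; [apply: im0 | ].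
- move=> y1 y2 [x1 [h1 <-]] [x2 [h2 <-]]; exists (x1 + x2); split; first exact: imD.
  by rewrite ga.
- move=> a p Ia [x0 <-]; exists (a *: x0); split; first exact: im1.
  by rewrite gs.
Qed.

Lemma img_sub (R : pzRingType) (M M' : lmodType R) (g : M -> M') :
  semilin_on id (fun _ => True) g -> submod (fun z => exists x, g x = z).
Proof.
move=> gl; have g0 := lin0 gl; case: gl => ga gs; split.
- by exists 0.
- by move=> _ _ [x1 <-] [x2 <-]; exists (x1 + x2); rewrite ga.
- by move=> r _ [x <-]; exists (r *: x); rewrite gs.
Qed.

Section Test.
Variables (R Rb B : pzRingType) (pi : {rmorphism R -> Rb}) (psi : {rmorphism Rb -> B}).
Definition phiB : {rmorphism R -> B} := (psi \o pi)%FUN.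
End Test.



Lemma klin_zero (K : pzRingType) (T X : lmodType K) : klin (fun _ : T => (0 : X)).
Proof. by split => *; rewrite ?addr0 ?scaler0. Qed.

Lemma B_data (R : pzRingType) (S : R -> Prop) (A : pzRingType) (phi : {rmorphism R -> A})
  (Rb : pzRingType) (pi : {rmorphism R -> Rb}) (B : pzRingType) (psi : {rmorphism Rb -> B}) :
  univ_loc S phi ->
  (forall a : A, exists s r, S s /\ phi s * a = phi r) ->
  (forall y : Rb, exists r, pi r = y) ->
  (forall r, pi r = 0 <-> ass phi r) ->
  univ_loc (img_set pi S) psi ->
  (forall b : B, exists s r, S s /\ phiB pi psi s * b = phiB pi psi r) /\
  (forall r, phiB pi psi r = 0 -> phi r = 0).
Proof.
move=> [HinvA uA] HfracA pis pik [HinvB uB].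
have HinvB' : inverts S (phiB pi psi).
  by move=> s Ss; apply: HinvB; exists s.
have [hA [hAe _]] := uA B (phiB pi psi) HinvB'.
pose j (y : Rb) : A := phi (projT1 (cid (pis y))).
have jpi : forall r, j (pi r) = phi r.
  move=> r; rewrite /j; case: cid => r' /= e.
  apply/eqP; rewrite -subr_eq0 -rmorphB; apply/eqP; apply/pik.
  by rewrite rmorphB e subrr.
have jnm : nmod_morphism j.
  split; first by rewrite -(rmorph0 pi) jpi rmorph0.
  move=> y1 y2; have [r1 <-] := pis y1; have [r2 <-] := pis y2.
  by rewrite -rmorphD !jpi rmorphD.
have jmm : monoid_morphism j.
  split; first by rewrite -(rmorph1 pi) jpi rmorph1.
  move=> y1 y2; have [r1 <-] := pis y1; have [r2 <-] := pis y2.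
  by rewrite -rmorphM !jpi rmorphM.
pose jaM := GRing.isNmodMorphism.Build _ _ j jnm.
pose jmM := GRing.isMonoidMorphism.Build _ _ j jmm.
pose jm : {rmorphism Rb -> A} := HB.pack j jaM jmM.
have jinv : inverts (img_set pi S) jm.
  move=> _ [s [Ss <-]]; rewrite /= jpi; exact: HinvA.
have [hB [hBe _]] := uB A jm jinv.
have hBA : forall a, hB (hA a) = a.
  have [h0 [_ u0]] := uA A phi HinvA.
  move=> a; pose c : {rmorphism A -> A} := (hB \o hA)%FUN.
  have e1 := u0 c (fun r => _) a.
  rewrite /c /= in e1; rewrite e1.
    by rewrite -(u0 idfun).
  by move=> r; rewrite /c /= hAe /phiB /= hBe /= jpi.
have hAB : forall b, hA (hB b) = b.
  have [h0 [_ u0]] := uB B psi HinvB.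
  move=> b; pose c : {rmorphism B -> B} := (hA \o hB)%FUN.
  have e1 := u0 c (fun y => _) b.
  rewrite /c /= in e1; rewrite e1.
    by rewrite -(u0 idfun).
  move=> y; have [r <-] := pis y.
  by rewrite /c /= hBe /= jpi hAe.
split.
- move=> b; have [s [r [Ss e]]] := HfracA (hB b).
  exists s, r; split => //.
  by rewrite -!hAe -(hAB b) -rmorphM e.
- move=> r e; rewrite -(hBA (phi r)) hAe e rmorph0 //.
Qed.


Unset Implicit Arguments.


Theorem theorem6p3 (R : pzRingType) (S : R -> Prop) (k : loc_kind)
  (A : pzRingType) (phi : {rmorphism R -> A})
  (Rb : pzRingType) (pi : {rmorphism R -> Rb})
  (B : pzRingType) (psi : {rmorphism Rb -> B}) :
  mult_set S ->
  univ_loc S phi ->                        (* A = S^{-1}R = R<S^{-1}> *)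
  localizable k S phi ->                   (* S in L_k(R, a), a = ass phi *)
  (forall y : Rb, exists r, pi r = y) ->
  (forall r, pi r = 0 <-> ass phi r) ->    (* Rb = R / a *)
  univ_loc (img_set pi S) psi ->           (* B = Sbar^{-1} Rb *)
  (loc_functor_exact phi <->
   forall (M2 : lmodType R) (M1 : M2 -> Prop), submod M1 ->
     torsion_quot pi psi
       (fun x => M1 x /\ ideal_mul (ass phi) (fun _ => True) x)
       (ideal_mul (ass phi) M1)).
Proof.
move=> mS uA lA pis pik uB.
case: mS => S1 _ SM.
have HinvA : forall s, S s -> exists y, phi s * y = 1 /\ y * phi s = 1 := uA.1.
have HfracA : forall a : A, exists s r, S s /\ phi s * a = phi r.
  case: lA => _ H _ a; have [s [r [x [Ss h1 h2 ->]]]] := H a.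
  by exists s, r; split => //; rewrite mulrA h2 mul1r.
have [HfracB kerB] := B_data uA HfracA pis pik uB.
have HinvB : forall s, S s -> exists y, phiB pi psi s * y = 1 /\ y * phiB pi psi s = 1.
  by move=> s Ss; apply: uB.1; exists s.
have kerA : forall r a, ass phi a -> ass phi (r * a).
  by move=> r a; rewrite /ass rmorphM => ->; rewrite mulr0.
split.
- move=> Hex M2 M1 M1s T io Ht t.
  pose M1t := SubMod M1s.
  have sT1 := @subT _ M1t; have s01 := @sub0 _ M1t.
  have qp1 : forall x : M1t, x = 0 -> True by [].
  have sT2 := @subT _ M2; have s02 := @sub0 _ M2.
  have qp2 : forall x : M2, x = 0 -> True by [].
  pose C1 := Cmod S1 SM HinvA HfracA sT1 s01 qp1.
  pose i1 := iotaC S1 SM HinvA HfracA sT1 s01 qp1.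
  pose C2 := Cmod S1 SM HinvA HfracA sT2 s02 qp2.
  pose i2 := iotaC S1 SM HinvA HfracA sT2 s02 qp2.
  have HC1 : is_tensor_quot phi (fun _ => True) (fun x => x = 0) i1 := C_tensor S1 SM HinvA HfracA sT1 s01 qp1.
  have HC2 : is_tensor_quot phi (fun _ => True) (fun x => x = 0) i2 := C_tensor S1 SM HinvA HfracA sT2 s02 qp2.
  case: (HC1) => sl1 hQ1 UP1; case: (HC2) => sl2 hQ2 UP2.
  have slf : semilin_on phi (fun _ : M1t => True) (fun x => i2 (sval x)).
    by case: sl2 => a2 s2; split => *; [rewrite sv_add a2 | rewrite sv_scale s2].
  have hQf : forall x : M1t, x = 0 -> i2 (sval x) = 0.
    by move=> x ->; rewrite sv_0; apply: hQ2.
  have [G [Gk Gi _]] := UP1 _ _ slf hQf.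
  have Hinj : forall u, G u = 0 -> u = 0.
    move=> u Gu.
    have sl0 : semilin_on id (fun _ => True) (fun _ : M1t => (0 : M1t)).
      by split => *; rewrite ?addr0 ?scaler0.
    have slv : semilin_on id (fun _ => True) (fun x : M1t => sval x) by [].
    have exv : forall y : M1t, sval y = 0 <-> exists x : M1t, (0 : M1t) = y.
      move=> y; split => [h | [x <-]] //; exists 0; apply: sv_inj; rewrite h.
      by [].
    have Fc : forall m : M1t, (fun _ : C1 => (0 : C1)) (i1 m) = i1 ((fun _ : M1t => (0 : M1t)) m).
      by move=> m; rewrite hQ1.
    have Gc : forall m : M1t, G (i1 m) = i2 (sval m) by move=> m; apply: Gi.
    have [v <-] := (Hex M1t M1t M2 (fun _ => 0) (fun x : M1t => sval x) sl0 slv exv C1 C1 C2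
                  i1 i1 i2 HC1 HC1 HC2 (fun _ => 0) G (@klin_zero _ _ _) Gk Fc Gc u).1 Gu.
    by [].
  have Pkill : forall p, M1 p /\ ideal_mul (ass phi) (fun _ => True) p -> io p = 0.
    move=> p [M1p Ip].
    pose pt : M1t := exist _ p M1p.
    have e0 : G (i1 pt) = 0.
      by rewrite Gi //=; apply: (sl_kill sT2 sl2 Ip).
    have := @C_zero _ _ _ _ S1 SM HinvA HfracA _ _ _ sT1 s01 qp1 pt I (Hinj _ e0).
    case=> _ [t0 [St0 [q [z [q0 Iz E]]]]].
    have Qtp : ideal_mul (ass phi) M1 (t0 *: p).
      have -> : t0 *: p = sval (t0 *: pt) by [].
      rewrite E q0 add0r.
      apply: (im_ind (Z := fun z : M1t => ideal_mul (ass phi) M1 (sval z))) Iz.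
      - exact: im0.
      - by move=> x y hx hy; apply: imD.
      - by move=> a q' Ka _; apply: im1 => //; apply: (proj2_sig q').
    case: Ht => [[ia isc] hQ _].
    have := hQ _ Qtp; rewrite isc; last by split.
    have [y [_ hy]] := uB.1 (pi t0) (ex_intro _ t0 (conj St0 erefl)).
    by move=> h; rewrite -[io p]scale1r -hy -scalerA h scaler0.
  case: Ht => sl hQ UP.
  have [g0 [_ _ u0]] := UP _ _ sl hQ.
  have e1 := u0 id (@klin_id _ _) (fun _ _ => erefl) t.
  have e2 := u0 (fun _ => 0) (@klin_zero _ _ _) (fun x Px => esym (Pkill x Px)) t.
  by rewrite /= in e1; rewrite e1 -e2.
- move=> Htor M1 M2 M3 f g fl gl ex T1 T2 T3 i1 i2 i3 h1 h2 h3 F G Fk Gk Fc Gc t.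
  have [E1_1 _] := tensor_props S1 SM HinvA HfracA (@subT _ M1) (@sub0 _ M1) (fun _ _ => I) h1.
  have [E1_2 _] := tensor_props S1 SM HinvA HfracA (@subT _ M2) (@sub0 _ M2) (fun _ _ => I) h2.
  have [_ E2_3] := tensor_props S1 SM HinvA HfracA (@subT _ M3) (@sub0 _ M3) (fun _ _ => I) h3.
  have i3_0 : i3 0 = 0 by case: h3 => _ hQ _; apply: hQ.
  have i2sl : semilin_on phi (fun _ => True) i2 by case: h2.
  split.
  + move=> Gt.
    have [s [m [Ss _ e]]] := E1_2 t.
    have gm0 : i3 (g m) = 0.
      by rewrite -Gc -e; case: Gk => _ ->; rewrite Gt scaler0.
    have [_ [s1 [S1' [q [z [q0 Iz E]]]]]] := E2_3 (g m) I gm0.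
    pose M1' := fun z => exists x, g x = z.
    have sM1' : submod M1' := img_sub gl.
    have sI : submod (ideal_mul (ass phi) (fun _ : M3 => True)) := sub_im _ kerA.
    have sP' := subI sM1' sI.
    have sQ' : submod (ideal_mul (ass phi) M1') := sub_im _ kerA.
    have QP' : forall x, ideal_mul (ass phi) M1' x -> M1' x /\ ideal_mul (ass phi) (fun _ => True) x.
      move=> x hx; split; first exact: (im_sub sM1' hx).
      by apply: (im_mono _ _ hx).
    have HTB := C_tensor S1 SM HinvB HfracB sP' sQ' QP'.
    have Hall := Htor M3 M1' sM1' _ _ HTB.
    have Pg : M1' (s1 *: g m) /\ ideal_mul (ass phi) (fun _ => True) (s1 *: g m).
      split; first by exists (s1 *: m); case: gl => _ ->.
      by rewrite E q0 add0r.
    have := @C_zero _ _ _ _ S1 SM HinvB HfracB _ _ _ sP' sQ' QP' _ Pg (Hall _).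
    case=> _ [s2 [S2 [q' [z' [Qq' Iz' E']]]]].
    have Iw : ideal_mul (ass phi) M1' ((s2 * s1) *: g m).
      rewrite -scalerA E'; apply: imD => //.
      apply: (im_mono _ _ Iz') => [a ka | p' [hp _]] //.
      exact: kerB.
    have [x [Ix gx]] := im_lift gl Iw.
    case: (gl) => ga gs.
    have gsub : forall a b, g (a - b) = g a - g b.
      by move=> a b; apply: (addIr (g b)); rewrite -(ga _ _ I I) !subrK.
    have [m1 fm1] : exists m1, f m1 = (s2 * s1) *: m - x.
      by apply/ex; rewrite gsub gs // gx subrr.
    case: (i2sl) => ia isc.
    have e2 : i2 ((s2 * s1) *: m) = F (i1 m1).
      have -> : (s2 * s1) *: m = f m1 + x by rewrite fm1 subrK.
      by rewrite ia // (sl_kill (@subT _ M2) i2sl Ix) addr0 Fc.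
    have Sw : S (s2 * s1 * s) := SM _ _ (SM _ _ S2 S1') Ss.
    have [y [_ hy]] := HinvA _ Sw.
    exists (y *: i1 m1).
    case: Fk => _ Fs.
    by rewrite Fs -e2 isc // -e !scalerA -mulrA -rmorphM hy scale1r.
  + move=> [u <-].
    have [s [m [Ss _ e]]] := E1_1 u.
    have [y [_ hy]] := HinvA _ Ss.
    have -> : u = y *: i1 m by rewrite -e scalerA hy scale1r.
    case: Fk => _ Fs; case: Gk => _ Gs.
    rewrite Fs Gs Fc Gc.
    have -> : g (f m) = 0 by apply/ex; exists m.
    by rewrite i3_0 scaler0.
Qed.
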